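(* Let \[ q(x,y,z,a,b)=\frac{(1+xz)(1+yz)}{1-xy}-a\frac{(x+z)(1+yz)}{x-y}+b\frac{(1+xz)(y+z)}{x-y}-ab\frac{(x+z)(y+z)}{1-xy}. \] For indeterminates $x_1,\dots,x_n$, $y_1,\dots,y_n$, $a_1,\dots,a_n$, $b_1,\dots,b_n$, $z$, \[ \det\left(q(x_i,y_j,z,a_i,b_j)\right)_{1\le i,j\le n}=\frac{(-1)^n}{\prod_{i=1}^n\prod_{j=1}^n(x_i-y_j)(1-x_iy_j)}\det W, \] where $W=(W_{i,j})_{1\le i,j\le 2n+1}$ is given, for $1\le j\le 2n+1$, by $W_{i,j}=x_i^{j-1}-a_ix_i^{2n+1-j}$ for $1\le i\le n$, $W_{i,j}=y_{i-n}^{j-1}-b_{i-n}y_{i-n}^{2n+1-j}$ for $n+1\le i\le 2n$, and $W_{2n+1,j}=(-z)^{2n+1-j}$. *)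

(* Defs.v *)
From HB Require Import structures.
From mathcomp Require Import all_boot all_order all_algebra.
Set Implicit Arguments. Unset Strict Implicit. Unset Printing Implicit Defensive.
Import Order.TTheory GRing.Theory Num.Theory.
Local Open Scope ring_scope.

Definition qfun (F : fieldType) (x y z a b : F) : F :=
  (1 + x * z) * (1 + y * z) / (1 - x * y)
  - a * ((x + z) * (1 + y * z) / (x - y))
  + b * ((1 + x * z) * (y + z) / (x - y))
  - a * b * ((x + z) * (y + z) / (1 - x * y)).

Definition Qmat (F : fieldType) (n : nat) (x y a b : 'I_n -> F) (z : F)
  : 'M[F]_n := \matrix_(i < n, j < n) qfun (x i) (y j) z (a i) (b j).

(* The (2n+1)x(2n+1) matrix W, rows split as n (x-rows) + n (y-rows) + 1
   (z-row); columns j = 0..2n (0-based, i.e. paper's j-1). *)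
Definition Wmat (F : fieldType) (n : nat) (x y a b : 'I_n -> F) (z : F)
  : 'M[F]_(n + n + 1) :=
  col_mx
    (col_mx
       (\matrix_(i < n, j < n + n + 1) (x i ^+ j - a i * x i ^+ (n + n - j)))
       (\matrix_(i < n, j < n + n + 1) (y i ^+ j - b i * y i ^+ (n + n - j))))
    (\matrix_(i < 1, j < n + n + 1) ((- z) ^+ (n + n - j))).

(* Main.v *)
Require Import Defs.
From HB Require Import structures.
From mathcomp Require Import all_boot all_order all_algebra.
From mathcomp Require Import zify ring.
Set Implicit Arguments. Unset Strict Implicit. Unset Printing Implicit Defensive.
Import Order.TTheory GRing.Theory Num.Theory.
Local Open Scope ring_scope.

Lemma block_diag_det (K : fieldType) (n : nat) (P Q : 'M[K]_n) (a b : 'rV[K]_n) :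
  (forall j, b 0 j != 0) ->
  \det (block_mx P Q (diag_mx a) (diag_mx b)) =
  \det (P *m diag_mx b - Q *m diag_mx a).
Proof.
move=> hb.
pose bi : 'rV[K]_n := \row_j (b 0 j)^-1.
have hbb : diag_mx bi *m diag_mx b = 1%:M.
  rewrite mulmx_diag; apply/matrixP => i j; rewrite !mxE.
  by case: (i == j); rewrite ?mulr1n ?mulr0n // mulVf.
have -> : block_mx P Q (diag_mx a) (diag_mx b) =
  block_mx (P - Q *m (diag_mx bi *m diag_mx a)) Q 0 (diag_mx b) *m
  block_mx 1%:M 0 (diag_mx bi *m diag_mx a) 1%:M.
  rewrite mulmx_block !mulmx1 !mulmx0 ?mul0mx !add0r ?addr0.
  by rewrite subrK mulmxA diag_mxC hbb mul1mx.
rewrite det_mulmx det_ublock det_lblock !det1 !mulr1 -det_mulmx.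
rewrite mulmxBl -!mulmxA [diag_mx a *m _]diag_mxC [diag_mx bi *m (_ *m _)]mulmxA hbb mul1mx.
by [].
Qed.

Lemma size_prod_seq (R : nzRingType) (I : Type) (s : seq I) (F : I -> {poly R}) :
  (forall i, size (F i) <= 3)%N -> (size (\prod_(i <- s) F i)%R <= (2 * size s).+1)%N.
Proof.
move=> h; elim: s => [|i s IH]; first by rewrite big_nil size_poly1.
rewrite big_cons; apply: leq_trans (size_polyMleq _ _) _.
have := h i; move: IH; set m := size (\prod_(j <- s) F j)%R.
rewrite /=; lia.
Qed.

Lemma size_lin (R : nzRingType) (a b : R) : (size (a%:P + b%:P * 'X)%R <= 2)%N.
Proof.
apply: leq_trans (size_polyD _ _) _; rewrite geq_max size_polyC.
apply/andP; split; first by case: (a != 0).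
apply: leq_trans (size_polyMleq _ _) _; rewrite size_polyC size_polyX.
by case: (b != 0).
Qed.

Lemma prod_pairs (R : comPzRingType) n (f : 'I_n -> 'I_n -> R) :
  \prod_(j < n) \prod_(k < n | k != j) f j k =
  \prod_(i < n) \prod_(j < n | (i < j)%N) (f i j * f j i).
Proof.
under [RHS]eq_bigr do rewrite big_split.
rewrite big_split /=.
rewrite [X in _ = _ * X](exchange_big_dep xpredT) //=.
rewrite -big_split /=; apply: eq_bigr => j _.
rewrite (bigID (fun k : 'I_n => (j < k)%N)) /=; congr (_ * _).
  by apply: eq_bigl => k; rewrite -val_eqE /=; lia.
by apply: eq_bigl => k; rewrite -val_eqE /=; lia.
Qed.

Section Gen.
Variables (K : fieldType) (n : nat) (y : 'I_n -> K).

Definition Psi (j : 'I_n) : {poly K} :=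
  \prod_(k < n | k != j) (('X - (y k)%:P) * (1 - (y k)%:P * 'X)).
Definition cp j := (1 - (y j)%:P * 'X) * Psi j.
Definition dp j := ('X - (y j)%:P) * Psi j.

Lemma hPsi j t : (Psi j).[t] = \prod_(k < n | k != j) ((t - y k) * (1 - y k * t)).
Proof. by rewrite horner_prod; apply: eq_bigr => k _; rewrite !hornerE. Qed.
Lemma hcp j t : (cp j).[t] = (1 - y j * t) * (Psi j).[t].
Proof. by rewrite /cp !hornerE. Qed.
Lemma hdp j t : (dp j).[t] = (t - y j) * (Psi j).[t].
Proof. by rewrite /dp !hornerE. Qed.

Lemma size_Psi j : (size (Psi j) <= (2 * n.-1).+1)%N.
Proof.
rewrite /Psi -big_filter.
have -> : n.-1 = size [seq k <- index_enum 'I_n | k != j].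
  by have := cardC1 j; rewrite card_ord => <-; rewrite cardE /enum_mem size_filter.
apply: size_prod_seq => k; apply: leq_trans (size_polyMleq _ _) _.
rewrite size_XsubC.
have : (size (1 - (y k)%:P * 'X)%R <= 2)%N.
  by have := size_lin (1:K) (- y k); rewrite polyC1 polyCN mulNr.
lia.
Qed.

Lemma size_cp j : (size (cp j) <= n + n)%N.
Proof.
apply: leq_trans (size_polyMleq _ _) _.
have : (size (1 - (y j)%:P * 'X)%R <= 2)%N.
  by have := size_lin (1:K) (- y j); rewrite polyC1 polyCN mulNr.
have := size_Psi j. have : (0 < n)%N by case: j => /= m; lia.
move: (size (Psi j)) (size _) => a b; lia.
Qed.

Lemma size_dp j : (size (dp j) <= n + n)%N.
Proof.
apply: leq_trans (size_polyMleq _ _) _.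
rewrite size_XsubC.
have := size_Psi j. have : (0 < n)%N by case: j => /= m; lia.
move: (size (Psi j)) => a; lia.
Qed.


Lemma prod_tt j (t : K) : \prod_(k < n | k != j) (t * t) = t ^+ (2 * n.-1).
Proof.
rewrite (_ : \prod_(k < n | k != j) (t * t) = \prod_(k in predC1 j) (t * t)) //.
rewrite prodr_const cardC1 card_ord -expr2 -exprM. done.
Qed.

Lemma nm1 (j : 'I_n) : (n + n).-1 = (2 * n.-1).+1.
Proof. case: j => /= m; lia. Qed.

Lemma rev_c j t : t != 0 -> t ^+ (n + n).-1 * (cp j).[t^-1] = (dp j).[t].
Proof.
move=> ht; rewrite hcp hdp !hPsi (nm1 j) exprSr -(prod_tt j t).
have e1 : t * (1 - y j * t^-1) = t - y j by field.
have e2 : \prod_(k < n | k != j) (t * t) * \prod_(k < n | k != j) ((t^-1 - y k) * (1 - y k * t^-1))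
  = \prod_(k < n | k != j) ((t - y k) * (1 - y k * t)).
  by rewrite -big_split; apply: eq_bigr => k _ /=; field.
rewrite -e1 -e2; ring.
Qed.

Lemma rev_d j t : t != 0 -> t ^+ (n + n).-1 * (dp j).[t^-1] = (cp j).[t].
Proof.
move=> ht; rewrite hcp hdp !hPsi (nm1 j) exprSr -(prod_tt j t).
have e1 : t * (t^-1 - y j) = 1 - y j * t by field.
have e2 : \prod_(k < n | k != j) (t * t) * \prod_(k < n | k != j) ((t^-1 - y k) * (1 - y k * t^-1))
  = \prod_(k < n | k != j) ((t - y k) * (1 - y k * t)).
  by rewrite -big_split; apply: eq_bigr => k _ /=; field.
rewrite -e1 -e2; ring.
Qed.

Lemma cp_y j k : k != j -> (cp j).[y k] = 0.
Proof. by move=> h; rewrite hcp hPsi (bigD1 k) //= subrr !mul0r mulr0. Qed.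
Lemma dp_y j k : (dp j).[y k] = 0.
Proof.
have [->|h] := eqVneq k j; first by rewrite hdp subrr mul0r.
by rewrite hdp hPsi (bigD1 k) //= subrr !mul0r mulr0.
Qed.
Lemma cp_yV j k : y k != 0 -> (cp j).[(y k)^-1] = 0.
Proof.
move=> h; have [e|hk] := eqVneq k j; first by rewrite -e hcp mulfV // subrr mul0r.
by rewrite hcp hPsi (bigD1 k) //= mulfV // subrr !(mulr0, mul0r).
Qed.
Lemma dp_yV j k : y k != 0 -> k != j -> (dp j).[(y k)^-1] = 0.
Proof. by move=> h hk; rewrite hdp hPsi (bigD1 k) //= mulfV // subrr !(mulr0, mul0r). Qed.

Lemma expVB (t : K) k m : t != 0 -> (m <= k)%N -> t ^+ (k - m) = t ^+ k * t^-1 ^+ m.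
Proof.
move=> ht hm; rewrite exprVn -{2}(subnK hm) exprD mulfK //.
by rewrite expf_neq0.
Qed.

Lemma sum_row (t u u1 : K) (p : {poly K}) : t != 0 -> (size p <= n + n)%N ->
  \sum_(m < n + n) (u * t ^+ m - u1 * t ^+ ((n + n).-1 - m)) * p`_m =
  u * p.[t] - u1 * (t ^+ (n + n).-1 * p.[t^-1]).
Proof.
move=> ht hs; rewrite (horner_coef_wide t hs) (horner_coef_wide t^-1 hs).
rewrite !mulr_sumr -sumrB; apply: eq_bigr => m _.
rewrite expVB //; last by case: m => /= m; lia.
ring.
Qed.

End Gen.

Definition Rx (R : comPzRingType) n (x U U1 : 'I_n -> R) : 'M[R]_(n, n + n) :=
  \matrix_(i < n, k < n + n) (U i * x i ^+ k - U1 i * x i ^+ ((n + n).-1 - k)).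
Definition Mm (R : comPzRingType) n (x y U U1 V V1 : 'I_n -> R) : 'M[R]_(n + n) :=
  col_mx (Rx x U U1) (Rx y V V1).
Definition Dd (R : comPzRingType) n (x y U U1 V V1 : 'I_n -> R) (i j : 'I_n) : R :=
  U i * V j * (y j - x i) + (U1 i * V j - U i * V1 j) * (1 - x i * y j)
  + U1 i * V1 j * (x i - y j).
Definition Lm (R : comPzRingType) n (x y U U1 V V1 : 'I_n -> R) : 'M[R]_n :=
  \matrix_(i < n, j < n) (Dd x y U U1 V V1 i j *
     \prod_(k < n | k != j) ((x i - y k) * (1 - x i * y k))).

Section Gen2.
Variables (K : fieldType) (n : nat) (x y U U1 V V1 : 'I_n -> K).
Hypothesis hx0 : forall i, x i != 0.
Hypothesis hy0 : forall j, y j != 0.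

Definition Cc : 'M[K]_(n + n, n) := \matrix_(m, j) (cp y j)`_m.
Definition Cd : 'M[K]_(n + n, n) := \matrix_(m, j) (dp y j)`_m.
Definition gam j := (cp y j).[y j].

Lemma RxCc (z W W1 : 'I_n -> K) : (forall i, z i != 0) ->
  Rx z W W1 *m Cc = \matrix_(i, j) (W i * (cp y j).[z i] - W1 i * (dp y j).[z i]).
Proof.
move=> hz; apply/matrixP => i j; rewrite !mxE.
under eq_bigr do rewrite !mxE.
by rewrite sum_row ?rev_c ?size_cp.
Qed.

Lemma RxCd (z W W1 : 'I_n -> K) : (forall i, z i != 0) ->
  Rx z W W1 *m Cd = \matrix_(i, j) (W i * (dp y j).[z i] - W1 i * (cp y j).[z i]).
Proof.
move=> hz; apply/matrixP => i j; rewrite !mxE.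
under eq_bigr do rewrite !mxE.
by rewrite sum_row ?rev_d ?size_dp.
Qed.

Lemma SyCc : Rx y V V1 *m Cc = diag_mx (\row_j (V j * gam j)).
Proof.
rewrite RxCc //; apply/matrixP => k j; rewrite !mxE dp_y mulr0 subr0.
have [->|hk] := eqVneq k j; first by rewrite mulr1n.
by rewrite mulr0n cp_y // mulr0.
Qed.

Lemma SyCd : Rx y V V1 *m Cd = diag_mx (\row_j (- (V1 j * gam j))).
Proof.
rewrite RxCd //; apply/matrixP => k j; rewrite !mxE dp_y mulr0 sub0r.
have [->|hk] := eqVneq k j; first by rewrite mulr1n.
by rewrite mulr0n cp_y // mulr0 oppr0.
Qed.

Lemma MC_det : (forall j, V1 j * gam j != 0) ->
  \det (Mm x y U U1 V V1) * \det (row_mx Cc Cd) =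
  \det (Lm x y U U1 V V1) * \prod_j gam j.
Proof.
move=> hb; rewrite -det_mulmx /Mm mul_col_row SyCc SyCd block_diag_det; last first.
  by move=> j; rewrite mxE oppr_eq0.
have -> : Rx x U U1 *m Cc *m diag_mx (\row_j - (V1 j * gam j)) -
   Rx x U U1 *m Cd *m diag_mx (\row_j (V j * gam j)) =
   Lm x y U U1 V V1 *m diag_mx (\row_j gam j).
  rewrite RxCc // RxCd // !mul_mx_diag; apply/matrixP => i j; rewrite !mxE.
  rewrite /gam !hcp !hdp.
  have -> : \prod_(k < n | k != j) ((x i - y k) * (1 - x i * y k)) = (Psi y j).[x i].
    by rewrite hPsi; apply: eq_bigr => k _; rewrite [y k * _]mulrC.
  rewrite /Dd; ring.
by rewrite det_mulmx det_diag; congr (_ * _); apply: eq_bigr => j _; rewrite mxE.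
Qed.

End Gen2.

Section Gen3.
Variables (K : fieldType) (n : nat) (y : 'I_n -> K).
Hypothesis hy0 : forall j, y j != 0.
Hypothesis hyy : forall j k, j != k -> y j != y k.
Hypothesis hy1 : forall j k, 1 - y j * y k != 0.

Lemma gam_neq0 j : gam y j != 0.
Proof.
rewrite /gam hcp hPsi mulf_neq0 //; apply/prodf_neq0 => k hk.
rewrite mulf_neq0 // ?subr_eq0 ?hyy // 1?eq_sym //.
Qed.

Lemma del_neq0 j : (dp y j).[(y j)^-1] != 0.
Proof.
apply: contraNneq (gam_neq0 j) => h.
by rewrite /gam -rev_d // h mulr0.
Qed.

Definition pts : 'rV[K]_(n + n) := row_mx (\row_j y j) (\row_j (y j)^-1).
Definition E1 : 'M[K]_(n, n + n) := \matrix_(k, m) (y k ^+ m).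
Definition E2 : 'M[K]_(n, n + n) := \matrix_(k, m) ((y k)^-1 ^+ m).

Lemma VT : (Vandermonde (n + n) pts)^T = col_mx E1 E2.
Proof.
apply/matrixP => i m; rewrite !mxE.
by case: splitP => k _; rewrite !mxE.
Qed.

Lemma Ev (t : K) (p : {poly K}) : (size p <= n + n)%N ->
  \sum_(m < n + n) t ^+ m * p`_m = p.[t].
Proof. by move=> hs; rewrite (horner_coef_wide t hs); apply: eq_bigr => m _; rewrite mulrC. Qed.


Lemma Vprod : \prod_(i < n + n) \prod_(j < n + n | (i < j)%N) (pts 0 j - pts 0 i) =
   \prod_j (dp y j).[(y j)^-1].
Proof.
have pL : forall j : 'I_n, pts 0 (lshift n j) = y j.
  by move=> j; rewrite /pts row_mxEl mxE.
have pR : forall j : 'I_n, pts 0 (rshift n j) = (y j)^-1.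
  by move=> j; rewrite /pts row_mxEr mxE.
rewrite big_split_ord /=.
have hL : forall i : 'I_n,
    \prod_(j < n + n | (lshift n i < j)%N) (pts 0 j - pts 0 (lshift n i)) =
    \prod_(j < n | (i < j)%N) (y j - y i) * \prod_(j < n) ((y j)^-1 - y i).
  move=> i; rewrite big_split_ord /=; congr (_ * _).
    by apply: eq_big => [j|j _]; rewrite ?pL.
  apply: eq_big => [j|j _]; rewrite ?pL ?pR //=.
  by case: i j => i hi [j hj] /=; lia.
have hR : forall i : 'I_n,
    \prod_(j < n + n | (rshift n i < j)%N) (pts 0 j - pts 0 (rshift n i)) =
    \prod_(j < n | (i < j)%N) ((y j)^-1 - (y i)^-1).
  move=> i; rewrite big_split_ord /= big_pred0 ?mul1r; last first.
    by move=> j; case: i j => i hi [j hj] /=; lia.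
  apply: eq_big => [j|j _]; rewrite ?pR //=.
  by rewrite ltn_add2l.
under eq_bigr do rewrite hL.
under [X in _ * X = _]eq_bigr do rewrite hR.
rewrite big_split /=.
have -> : \prod_j (dp y j).[(y j)^-1] =
   \prod_(j < n) \prod_(k < n) ((y j)^-1 - y k) *
   \prod_(j < n) \prod_(k < n | k != j) (1 - y k * (y j)^-1).
  rewrite -big_split /=; apply: eq_bigr => j _.
  rewrite hdp hPsi big_split /= mulrA; congr (_ * _).
  by rewrite [in RHS](bigD1 j) //=.
rewrite prod_pairs exchange_big /=.
have -> : \prod_(i < n) \prod_(j < n | (i < j)%N)
     ((1 - y j * (y i)^-1) * (1 - y i * (y j)^-1)) =
   \prod_(i < n) \prod_(j < n | (i < j)%N) (y j - y i) *
   \prod_(i < n) \prod_(j < n | (i < j)%N) ((y j)^-1 - (y i)^-1).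
  rewrite -big_split /=; apply: eq_bigr => i _.
  rewrite -big_split /=; apply: eq_bigr => j _.
  by field; rewrite hy0 hy0.
ring.
Qed.

Lemma det_C : \det (row_mx (Cc y) (Cd y)) = \prod_j gam y j.
Proof.
have hV : \det (Vandermonde (n + n) pts) = \prod_j (dp y j).[(y j)^-1].
  by rewrite det_Vandermonde Vprod.
have : \det ((Vandermonde (n + n) pts)^T *m row_mx (Cc y) (Cd y)) =
    \prod_j gam y j * \prod_j (dp y j).[(y j)^-1].
  rewrite VT mul_col_row.
  have -> : E1 *m Cc y = diag_mx (\row_j gam y j).
    apply/matrixP => k j; rewrite !mxE; under eq_bigr do rewrite !mxE.
    rewrite Ev ?size_cp //.
    have [->|hk] := eqVneq k j; first by rewrite mulr1n.
    by rewrite mulr0n cp_y.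
  have -> : E1 *m Cd y = 0.
    apply/matrixP => k j; rewrite !mxE; under eq_bigr do rewrite !mxE.
    by rewrite Ev ?size_dp // dp_y.
  have -> : E2 *m Cc y = 0.
    apply/matrixP => k j; rewrite !mxE; under eq_bigr do rewrite !mxE.
    by rewrite Ev ?size_cp // cp_yV.
  have -> : E2 *m Cd y = diag_mx (\row_j (dp y j).[(y j)^-1]).
    apply/matrixP => k j; rewrite !mxE; under eq_bigr do rewrite !mxE.
    rewrite Ev ?size_dp //.
    have [->|hk] := eqVneq k j; first by rewrite mulr1n.
    by rewrite mulr0n dp_yV.
  rewrite det_ublock !det_diag.
  by congr (_ * _); apply: eq_bigr => j _; rewrite mxE.
rewrite det_mulmx det_tr hV mulrC => /mulIf; apply.
by apply/prodf_neq0 => j _; apply: del_neq0.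
Qed.

End Gen3.

Theorem gen (K : fieldType) n (x y U U1 V V1 : 'I_n -> K) :
  (forall i, x i != 0) -> (forall j, y j != 0) ->
  (forall j k, j != k -> y j != y k) -> (forall j k, 1 - y j * y k != 0) ->
  (forall j, V1 j != 0) ->
  \det (Mm x y U U1 V V1) = \det (Lm x y U U1 V V1).
Proof.
move=> hx hy hyy hy1 hV.
have := MC_det U U1 V hx hy (fun j => mulf_neq0 (hV j) (gam_neq0 hyy hy1 j)).
rewrite det_C // => /mulIf; apply.
by apply/prodf_neq0 => j _; apply: gam_neq0.
Qed.

Lemma map_Mm (R S : comPzRingType) (f : {rmorphism R -> S}) n (x y U U1 V V1 : 'I_n -> R) :
  map_mx f (Mm x y U U1 V V1) =
  Mm (fun i => f (x i)) (fun i => f (y i)) (fun i => f (U i)) (fun i => f (U1 i))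
     (fun i => f (V i)) (fun i => f (V1 i)).
Proof.
apply/matrixP => i j; rewrite !mxE.
by case: splitP => k _; rewrite !mxE /= rmorphB !rmorphM !rmorphXn.
Qed.

Lemma map_Lm (R S : comPzRingType) (f : {rmorphism R -> S}) n (x y U U1 V V1 : 'I_n -> R) :
  map_mx f (Lm x y U U1 V V1) =
  Lm (fun i => f (x i)) (fun i => f (y i)) (fun i => f (U i)) (fun i => f (U1 i))
     (fun i => f (V i)) (fun i => f (V1 i)).
Proof.
apply/matrixP => i j; rewrite !mxE rmorphM rmorph_prod /Dd.
rewrite !(rmorphD, rmorphN, rmorphB, rmorphM, rmorph1); congr (_ * _).
by apply: eq_bigr => k _; rewrite !(rmorphD, rmorphN, rmorphB, rmorphM, rmorph1).
Qed.

Lemma Mm_ext (R : comPzRingType) n (x y U U1 V V1 x' y' U' U1' V' V1' : 'I_n -> R) :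
  x =1 x' -> y =1 y' -> U =1 U' -> U1 =1 U1' -> V =1 V' -> V1 =1 V1' ->
  Mm x y U U1 V V1 = Mm x' y' U' U1' V' V1'.
Proof.
move=> e1 e2 e3 e4 e5 e6; apply/matrixP => i j; rewrite !mxE.
by case: splitP => k _; rewrite !mxE ?e1 ?e2 ?e3 ?e4 ?e5 ?e6.
Qed.

Lemma Lm_ext (R : comPzRingType) n (x y U U1 V V1 x' y' U' U1' V' V1' : 'I_n -> R) :
  x =1 x' -> y =1 y' -> U =1 U' -> U1 =1 U1' -> V =1 V' -> V1 =1 V1' ->
  Lm x y U U1 V V1 = Lm x' y' U' U1' V' V1'.
Proof.
move=> e1 e2 e3 e4 e5 e6; apply/matrixP => i j; rewrite !mxE /Dd.
rewrite !e1 !e2 !e3 !e4 !e5 !e6; congr (_ * _).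
by apply: eq_bigr => k _; rewrite ?e1 ?e2.
Qed.

Section Density.
Variables (F : fieldType).

Lemma XaddC_neq0 (c : F) : 'X + c%:P != 0.
Proof. by rewrite -size_poly_eq0 size_XaddC. Qed.

Lemma XnaddC_neq0 (c : F) m : 'X^(m.+1) + c%:P != 0.
Proof. by rewrite -size_poly_eq0 size_XnaddC. Qed.

Lemma yp_neq (c d : F) (j k : nat) : j != k -> 'X^(j.+1) + c%:P != 'X^(k.+1) + d%:P.
Proof.
move=> hjk; apply/eqP => h; have := congr1 (fun p : {poly F} => p`_(j.+1)) h.
rewrite !coefD !coefXn !coefC /= eqxx eqSS (negPf hjk) addr0 => /eqP.
by rewrite addr0 oner_eq0.
Qed.

Lemma yp1_neq (c d : F) (j k : nat) : 1 - ('X^(j.+1) + c%:P) * ('X^(k.+1) + d%:P) != 0.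
Proof.
apply/eqP => h; have := congr1 (fun p : {poly F} => p`_(j.+1 + k.+1)) h.
rewrite mulrDl !mulrDr -exprD -polyCM coefB coef1 !coefD coefXn coefMC coefCM !coefXn coefC.
rewrite eqxx /= (_ : (j.+1 + k.+1 == j.+1)%N = false); last by apply/negbTE; lia.
rewrite (_ : (j.+1 + k.+1 == k.+1)%N = false); last by apply/negbTE; lia.
rewrite !(mul0r, mulr0, addr0, sub0r) => /eqP.
by rewrite coef0 oppr_eq0 oner_eq0.
Qed.

End Density.

Theorem mainid (F : fieldType) n (x y U U1 V V1 : 'I_n -> F) :
  \det (Mm x y U U1 V V1) = \det (Lm x y U U1 V V1).
Proof.
pose tf := @FracField.tofrac {poly F}.
pose xp i : {poly F} := 'X + (x i)%:P.
pose yp (j : 'I_n) : {poly F} := 'X^((j : nat).+1) + (y j)%:P.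
pose V1p j : {poly F} := 'X + (V1 j)%:P.
have key : \det (Mm xp yp (fun i => (U i)%:P) (fun i => (U1 i)%:P)
                   (fun i => (V i)%:P) V1p) =
           \det (Lm xp yp (fun i => (U i)%:P) (fun i => (U1 i)%:P)
                   (fun i => (V i)%:P) V1p).
  apply/eqP; rewrite -(tofrac_eq (R := {poly F})); apply/eqP.
  rewrite -!det_map_mx map_Mm map_Lm; apply: gen.
  - by move=> i; rewrite tofrac_eq0 XaddC_neq0.
  - by move=> i; rewrite tofrac_eq0 XnaddC_neq0.
  - by move=> j k hjk; rewrite tofrac_eq; apply: yp_neq.
  - move=> j k; rewrite -rmorphM -(rmorph1 tf) -rmorphB tofrac_eq0.
    by apply: yp1_neq.
  - by move=> i; rewrite tofrac_eq0 XaddC_neq0.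
have := congr1 (horner_eval 0) key.
rewrite -!det_map_mx map_Mm map_Lm.
have e1 : forall i, horner_eval 0 (xp i) = x i.
  by move=> i; rewrite horner_evalE !hornerE.
have e2 : forall i, horner_eval 0 (yp i) = y i.
  by move=> i; rewrite horner_evalE !hornerE expr0n /= add0r.
have e3 : forall (c : F), horner_eval 0 c%:P = c.
  by move=> c; rewrite horner_evalE hornerC.
have e4 : forall i, horner_eval 0 (V1p i) = V1 i.
  by move=> i; rewrite horner_evalE !hornerE.
by rewrite (Mm_ext e1 e2 (fun i => e3 (U i)) (fun i => e3 (U1 i)) (fun i => e3 (V i)) e4)
   (Lm_ext e1 e2 (fun i => e3 (U i)) (fun i => e3 (U1 i)) (fun i => e3 (V i)) e4).
Qed.

Lemma sum_shift (R : pzSemiRingType) N (f : 'I_N -> R) (j : nat) (k0 : 'I_N) :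
  k0 = j.+1 :> nat -> \sum_(k < N) f k * (k == j.+1 :> nat)%:R = f k0.
Proof.
move=> e; rewrite (bigD1 k0) //= e eqxx mulr1 big1 ?addr0 // => k hk.
rewrite (_ : (k == j.+1 :> nat) = false) ?mulr0 //.
by apply/negbTE; apply: contra hk => /eqP e'; apply/eqP/val_inj; rewrite /= e e'.
Qed.

Lemma sum_shift0 (R : pzSemiRingType) N (f : 'I_N -> R) (j : nat) :
  (N <= j.+1)%N -> \sum_(k < N) f k * (k == j.+1 :> nat)%:R = 0.
Proof.
move=> h; apply: big1 => k _; rewrite (_ : (k == j.+1 :> nat) = false) ?mulr0 //.
by case: k => k hk /=; apply/negbTE; apply/eqP => e; move: hk; rewrite e; lia.
Qed.

Section Final.
Variables (F : fieldType) (n : nat) (x y a b : 'I_n -> F) (z : F).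

Definition Uf i := 1 + x i * z.
Definition U1f i := a i * (x i + z).
Definition Vf j := 1 + y j * z.
Definition V1f j := b j * (y j + z).

Definition Zm : 'M[F]_(n + n + 1) :=
  \matrix_(i, j) ((i == j :> nat)%:R + z * (i == j.+1 :> nat)%:R).

Lemma det_Zm : \det Zm = 1.
Proof.
rewrite det_trig.
  by apply: big1 => i _; rewrite mxE eqxx (_ : (i == i.+1 :> nat) = false) ?mulr0 ?addr0 //; lia.
apply/is_trig_mxP => i j hij; rewrite mxE.
rewrite (_ : (i == j :> nat) = false); last by lia.
by rewrite (_ : (i == j.+1 :> nat) = false) ?mulr0 ?addr0 //; lia.
Qed.

Lemma WZ_entry i j : (Wmat x y a b z *m Zm) i j =
  Wmat x y a b z i j +
  z * \sum_(k < n + n + 1) Wmat x y a b z i k * (k == j.+1 :> nat)%:R.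
Proof.
rewrite mxE; under eq_bigr => k _ do rewrite [Zm _ _]mxE mulrDr.
rewrite big_split /=; congr (_ + _).
  rewrite (bigD1 j) //= eqxx mulr1 big1 ?addr0 // => k hk.
  by rewrite (_ : (k == j :> nat) = false) ?mulr0 //; apply/negbTE.
rewrite mulr_sumr; apply: eq_bigr => k _; ring.
Qed.

Lemma det_W : \det (Wmat x y a b z) = \det (Mm x y Uf U1f Vf V1f).
Proof.
have := det_mulmx (Wmat x y a b z) Zm; rewrite det_Zm mulr1 => <-.
rewrite -[Wmat x y a b z *m Zm]submxK.
have -> : dlsubmx (Wmat x y a b z *m Zm) = 0.
  apply/matrixP => i j; rewrite [in RHS]mxE [LHS]mxE [LHS]mxE WZ_entry.
  have hk : ((lshift 1 j : nat).+1 < n + n + 1)%N by have := ltn_ord j; rewrite /=; lia.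
  rewrite (@sum_shift _ _ _ _ (Ordinal hk)) //.
  rewrite /Wmat !col_mxEd !mxE /=.
  rewrite (_ : (n + n - j = (n + n - j.+1).+1)%N); last by have := ltn_ord j; rewrite /=; lia.
  by rewrite exprS; ring.
rewrite det_ublock.
have -> : drsubmx (Wmat x y a b z *m Zm) = 1%:M.
  apply/matrixP => i j; rewrite [in RHS]mxE [LHS]mxE [LHS]mxE WZ_entry sum_shift0 /=; last by lia.
  rewrite mulr0 addr0 ord1.
  rewrite /Wmat col_mxEd !mxE /=.
  by rewrite (ord1 j) /= addn0 subnn expr0.
rewrite det_scalar1 mulr1; congr (\det _); apply/matrixP => i j.
rewrite [LHS]mxE [LHS]mxE WZ_entry.
have hk : ((lshift 1 j : nat).+1 < n + n + 1)%N by have := ltn_ord j; rewrite /=; lia.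
rewrite (@sum_shift _ _ _ _ (Ordinal hk)) //.
have ej : (n + n - j = ((n + n).-1 - j).+1)%N by have := ltn_ord j; rewrite /=; lia.
have ej1 : (n + n - j.+1 = ((n + n).-1 - j))%N by have := ltn_ord j; rewrite /=; lia.
rewrite /Wmat /Mm !col_mxEu.
case: (splitP i) => k hi.
  have -> : i = lshift n k by apply/val_inj.
  rewrite !col_mxEu !mxE /= ej1 ej.
  by rewrite /Uf /U1f !exprS; ring.
have -> : i = rshift n k by apply/val_inj.
rewrite !col_mxEd !mxE /= ej1 ej.
by rewrite /Vf /V1f !exprS; ring.
Qed.

Hypothesis hxy : forall i j, x i - y j != 0.
Hypothesis hxy1 : forall i j, 1 - x i * y j != 0.

Lemma Q_eq : Qmat x y a b z =
  diag_mx (\row_i (- (\prod_(k < n) ((x i - y k) * (1 - x i * y k)))^-1))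
   *m Lm x y Uf U1f Vf V1f.
Proof.
rewrite mul_diag_mx; apply/matrixP => i j; rewrite !mxE (bigD1 j) //=.
set pr := \prod_(k < n | k != j) _.
have hpr : pr != 0.
  by apply/prodf_neq0 => k _; rewrite mulf_neq0.
have h1 := hxy i j; have h2 := hxy1 i j.
rewrite /qfun /Dd /Uf /U1f /Vf /V1f.
field.
by rewrite hpr h1 h2.
Qed.

End Final.

Theorem lemma4p5 (F : fieldType) (n : nat) (x y a b : 'I_n -> F) (z : F)
  (hxy : forall i j, x i - y j != 0)
  (hxy1 : forall i j, 1 - x i * y j != 0) :
  \det (Qmat x y a b z) =
    (-1) ^+ n / (\prod_(i < n) \prod_(j < n) ((x i - y j) * (1 - x i * y j)))
    * \det (Wmat x y a b z).
Proof.
rewrite Q_eq // det_mulmx det_diag det_W -mainid; congr (_ * _).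
under eq_bigr do rewrite mxE.
by rewrite prodrN prodfV card_ord.
Qed.
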